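(* Let $1\le p,q<\infty$ and $\theta>0$. The vanishing grand amalgam Lebesgue function space $$l^{\overset{\circ}{q}),\theta}(L^p)=\Big\{g\in l^{q),\theta}(L^p):\ \lim_{\varepsilon\to0}\varepsilon^{\theta}\sum_{n\in X}\Big(\int_n^{n+1}|g(x)|^p\,dx\Big)^{\frac{q(1+\varepsilon)}{p}}=0\Big\}$$ is a closed subspace of $l^{q),\theta}(L^p)$.
   Context: Let $X$ be one of $\mathbb N,\mathbb N_0,\mathbb Z$ and $I_k=[k,k+1)$ for $k\in X$. The space $l^{q),\theta}(L^p)$ consists of complex-valued measurable $g$ on $\bigcup_{k\in X}I_k$ with $g\chi_{I_k}\in L^p$ for all $k$ and $$\|g\|_{p,q),\theta}:=\sup_{\varepsilon>0}\Big(\varepsilon^{\theta}\sum_{k\in X}\Big(\int_k^{k+1}|g(x)|^p\,dx\Big)^{\frac{q(1+\varepsilon)}{p}}\Big)^{\frac{1}{q(1+\varepsilon)}}<\infty,$$ with the topology given by this norm. *)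

(* Defs.v *)
From HB Require Import structures.
From mathcomp Require Import all_boot all_order all_algebra.
From mathcomp Require Import all_classical all_reals all_analysis.
From mathcomp Require Import complex.
Set Implicit Arguments. Unset Strict Implicit. Unset Printing Implicit Defensive.
Import Order.TTheory GRing.Theory Num.Theory.
Import numFieldNormedType.Exports.
Local Open Scope classical_set_scope.
Local Open Scope ring_scope.

Inductive index_kind := IdxN | IdxN0 | IdxZ.

Definition idx_set (X : index_kind) : set int :=
  match X with
  | IdxN => [set k : int | (1 <= k)%R]
  | IdxN0 => [set k : int | (0 <= k)%R]
  | IdxZ => setT
  end.

Section GrandAmalgam.
Variable R : realType.

Definition I_k (k : int) : set R := `[k%:~R, k%:~R + 1[%classic.

Definition cmeasurable_on (D : set R) (g : R -> R[i]) : Prop :=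
  measurable_fun D (fun x => complex.Re (g x)) /\
  measurable_fun D (fun x => complex.Im (g x)).

Definition loc_int (p : R) (g : R -> R[i]) (k : int) : \bar R :=
  (\int[lebesgue_measure]_(x in I_k k) ((ComplexField.Normc.normc (g x)) `^ p)%:E)%E.

Definition locLp (X : index_kind) (p : R) (g : R -> R[i]) : Prop :=
  forall k, idx_set X k ->
    cmeasurable_on (I_k k) g /\ (loc_int p g k < +oo)%E.

Definition grand_sum (X : index_kind) (p q theta : R) (g : R -> R[i]) (eps : R)
  : \bar R :=
  ((eps `^ theta)%:E *
    \esum_(k in idx_set X) poweR (loc_int p g k) (q * (1 + eps) / p))%E.

Definition grand_norm (X : index_kind) (p q theta : R) (g : R -> R[i]) : \bar R :=
  ereal_sup [set poweR (grand_sum X p q theta g eps) (q * (1 + eps))^-1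
            | eps in [set e : R | 0 < e]].

Definition grand_amalgam (X : index_kind) (p q theta : R) : set (R -> R[i]) :=
  [set g | locLp X p g /\ (grand_norm X p q theta g < +oo)%E].

Definition vanishing_grand_amalgam (X : index_kind) (p q theta : R)
  : set (R -> R[i]) :=
  [set g | grand_amalgam X p q theta g /\
     (grand_sum X p q theta g @ 0^'+ --> 0%E)].

End GrandAmalgam.

(* Main.v *)
Set Warnings "-notation-overridden,-ambiguous-paths,-notation-incompatible-prefix".
Require Import Defs.
From HB Require Import structures.
From mathcomp Require Import all_boot all_order all_algebra.
From mathcomp Require Import all_classical all_reals all_analysis.
From mathcomp Require Import complex measurable_realfun ring lra.
Import Order.TTheory GRing.Theory Num.Theory.
Import numFieldNormedType.Exports.
Local Open Scope classical_set_scope.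
Local Open Scope ring_scope.

Section Aux.
Variable R : realType.
Local Notation nc := (@ComplexField.Normc.normc R).

Lemma ncE (z : R[i]) : nc z = Num.sqrt (complex.Re z ^+ 2 + complex.Im z ^+ 2).
Proof. by case: z. Qed.

Lemma nc_ge0 (z : R[i]) : 0 <= nc z.
Proof. by rewrite ncE sqrtr_ge0. Qed.

Lemma mnormR (p : R) (D : set R) (f : R -> R[i]) :
  cmeasurable_on D f -> measurable_fun D (fun x => (nc (f x)) `^ p).
Proof.
move=> [mre mim].
apply: (measurableT_comp (measurable_powR p)).
have -> : (fun x => nc (f x)) = Num.sqrt \o (fun x => complex.Re (f x) ^+ 2 + complex.Im (f x) ^+ 2).
  by apply/funext => x; rewrite /= ncE.
apply: (measurableT_comp (continuous_measurable_fun (@sqrt_continuous R))).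
by apply: measurable_funD; apply: measurable_funX.
Qed.

Lemma mnorm (p : R) (D : set R) (f : R -> R[i]) :
  cmeasurable_on D f -> measurable_fun D (fun x => ((nc (f x)) `^ p)%:E).
Proof. by move=> mf; apply/measurable_EFinP; exact: mnormR. Qed.

Lemma mI (k : int) : measurable (@I_k R k).
Proof. exact: measurable_itv. Qed.

Lemma powR_sum (a b t : R) : 0 <= a -> 0 <= b -> 0 <= t ->
  (a + b) `^ t <= 2 `^ t * (a `^ t + b `^ t).
Proof.
move=> a0 b0 t0.
suff key : forall m, a <= m -> b <= m -> m `^ t <= a `^ t + b `^ t ->
  (a + b) `^ t <= 2 `^ t * (a `^ t + b `^ t).
  have := powR_ge0 a t; have := powR_ge0 b t => pa pb.
  by have [hab|hab] := leP a b; [apply: (key b) => //; lra|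
    apply: (key a) => //; lra].
move=> m ha hb hm.
have m0 : 0 <= m by apply: le_trans ha.
have h1 : a + b <= 2 * m by lra.
apply: (le_trans (ge0_ler_powR t0 _ _ h1)); rewrite ?nnegrE; try lra.
rewrite powRM //; try lra.
by apply: ler_wpM2l => //; exact: powR_ge0.
Qed.

Lemma loc_int_ge0 p (f : R -> R[i]) k : (0 <= loc_int p f k)%E.
Proof. by apply: integral_ge0 => x _; rewrite lee_fin powR_ge0. Qed.

Lemma loc_int_le p (h f1 f2 : R -> R[i]) (M : R) k :
  0 <= M -> 0 <= p ->
  cmeasurable_on (@I_k R k) h -> cmeasurable_on (@I_k R k) f1 ->
  cmeasurable_on (@I_k R k) f2 ->
  (forall x, nc (h x) <= M * (nc (f1 x) + nc (f2 x))) ->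
  (loc_int p h k <= (M `^ p * 2 `^ p)%:E * (loc_int p f1 k + loc_int p f2 k))%E.
Proof.
move=> M0 p0 mh m1 m2 hb.
rewrite /loc_int.
set c := M `^ p * 2 `^ p.
have c0 : 0 <= c by rewrite mulr_ge0 // powR_ge0.
apply: (@le_trans _ _ (\int[lebesgue_measure]_(x in @I_k R k)
   ((c * (nc (f1 x) `^ p + nc (f2 x) `^ p))%:E))%E).
  apply: ge0_le_integral => //.
  - exact: mI.
  - by move=> x _; rewrite lee_fin powR_ge0.
  - exact: mnorm.
  - apply/measurable_EFinP; apply: measurable_funM; first exact: measurable_cst.
    by apply: measurable_funD; apply: mnormR.
  - move=> x _; rewrite lee_fin.
    have := hb x => hx.
    apply: (le_trans (ge0_ler_powR p0 _ _ hx)); rewrite ?nnegrE ?nc_ge0 //.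
      by rewrite mulr_ge0 // addr_ge0 // nc_ge0.
    rewrite powRM ?addr_ge0 ?nc_ge0 // /c -mulrA.
    apply: ler_wpM2l; first exact: powR_ge0.
    by apply: powR_sum; rewrite ?nc_ge0.
under eq_integral do rewrite EFinM.
rewrite ge0_integralZl_EFin //; last 3 first.
- exact: mI.
- by move=> x _; rewrite lee_fin addr_ge0 // powR_ge0.
- by apply/measurable_EFinP; apply: measurable_funD; apply: mnormR.
under eq_integral do rewrite EFinD.
rewrite ge0_integralD //.
- exact: mI.
- by move=> x _; rewrite lee_fin powR_ge0.
- exact: mnorm.
- by move=> x _; rewrite lee_fin powR_ge0.
- exact: mnorm.
Qed.

Lemma ab_le (a b : R) : 0 <= a -> 0 <= b -> a * b <= (a + 1) * (b + b).
Proof. move=> a0 b0; nra. Qed.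

Local Open Scope ereal_scope.

Lemma powe_le (H A B : \bar R) (c s : R) : 0 <= H -> 0 <= A -> 0 <= B ->
  (0 < c)%R -> (0 < s)%R -> H <= c%:E * (A + B) ->
  poweR H s <= ((2 * c) `^ s)%:E * (poweR A s + poweR B s).
Proof.
move=> H0 A0 B0 c0 s0 hle.
have s0' : s != 0%R by rewrite gt_eqF.
have K0 : (0 < (2 * c) `^ s)%R by apply: powR_gt0; rewrite mulr_gt0.
case: A A0 hle => [a| |] A0 hle //; last first.
  by rewrite poweRyr // addye ?gt0_muley ?leey ?lte_fin //;
     apply: contraTneq (poweR_ge0 B s) => ->.
case: B B0 hle => [b| |] B0 hle //; last first.
  by rewrite (poweRyr s0') addey ?gt0_muley ?leey ?lte_fin //;
     apply: contraTneq (poweR_ge0 (a%:E) s) => ->.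
case: H H0 hle => [h H0 hle| H0 hle| H0 hle]; last first.
- by rewrite leeNy_eq in H0.
- by rewrite -EFinD -EFinM leye_eq in hle.
rewrite lee_fin in A0; rewrite lee_fin in B0; rewrite lee_fin in H0.
rewrite -EFinD -EFinM lee_fin in hle.
rewrite !poweR_EFin -EFinD -EFinM lee_fin.
have s0'' : (0 <= s)%R by apply: ltW.
apply: (le_trans (ge0_ler_powR s0'' _ _ hle)); rewrite ?nnegrE //.
  by rewrite mulr_ge0 ?addr_ge0 // ltW.
rewrite (@powRM _ c (a + b) s) ?addr_ge0 ?(ltW c0) //.
rewrite (@powRM _ 2 c s) ?(ltW c0) // [(2 `^ s * _)%R]mulrC.
rewrite -mulrA; apply: ler_wpM2l; first exact: powR_ge0.
exact: powR_sum.
Qed.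

Lemma esumZ_le (T : choiceType) (S : set T) (K : R) (f : T -> \bar R) :
  (0 <= K)%R -> (forall i, 0 <= f i) ->
  \esum_(i in S) (K%:E * f i) <= K%:E * \esum_(i in S) f i.
Proof.
move=> K0 f0; apply: ge_ereal_sup => _ [A [finA AS]] <-.
rewrite -ge0_mule_fsumr //; apply: lee_wpmul2l; first by rewrite lee_fin.
by apply: ereal_sup_ubound; exists A.
Qed.

End Aux.

Section Core.
Variables (R : realType) (X : index_kind) (p q theta : R).
Hypotheses (hp : (1 <= p)%R) (hq : (1 <= q)%R) (htheta : (0 < theta)%R).
Local Notation nc := (@ComplexField.Normc.normc R).
Local Notation gs := (grand_sum X p q theta).

Local Open Scope ereal_scope.
Definition cst_c (M : R) := (2 * (M `^ p * 2 `^ p))%R.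

Lemma cst_c_ge1 M : (1 <= M)%R -> (1 <= cst_c M)%R.
Proof.
move=> M1; rewrite /cst_c.
have e1 : ((1 : R) `^ p = 1)%R by rewrite powR1.
have p0 : (0 <= p)%R := le_trans ler01 hp.
have h1 : (1 <= M `^ p)%R by rewrite -{1}e1 ge0_ler_powR ?nnegrE //; lra.
have h2 : (1 <= 2 `^ p)%R by rewrite -{1}e1 ge0_ler_powR ?nnegrE //; lra.
have := mulr_ge0 (le_trans ler01 h1) (le_trans ler01 h2).
have : (1 <= M `^ p * 2 `^ p)%R.
  by have := ler_pM ler01 ler01 h1 h2; rewrite mulr1.
lra.
Qed.

Lemma core (h f1 f2 : R -> R[i]) (M eps : R) : (1 <= M)%R -> (0 < eps)%R ->
  (forall k, idx_set X k -> cmeasurable_on (@I_k R k) h /\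
     cmeasurable_on (@I_k R k) f1 /\ cmeasurable_on (@I_k R k) f2) ->
  (forall x, (nc (h x) <= M * (nc (f1 x) + nc (f2 x)))%R) ->
  gs h eps <= ((cst_c M) `^ (q * (1 + eps) / p))%:E * (gs f1 eps + gs f2 eps).
Proof.
move=> M1 eps0 mk hb.
have p0 : (0 < p)%R := lt_le_trans ltr01 hp.
have q0 : (0 < q)%R := lt_le_trans ltr01 hq.
have e10 : (0 < 1 + eps)%R by lra.
have s0 : (0 < q * (1 + eps) / p)%R by rewrite divr_gt0 // mulr_gt0.
set s := (q * (1 + eps) / p)%R.
set K := ((cst_c M) `^ s)%R.
have K0 : (0 <= K)%R by apply: powR_ge0.
rewrite /grand_sum -/s.
set e := (eps `^ theta)%R.
have e0 : (0 <= e)%R by apply: powR_ge0.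
rewrite -muleDr //; last by apply: ge0_adde_def; rewrite inE; apply: esum_ge0 => *; exact: poweR_ge0.
rewrite muleCA; apply: lee_wpmul2l; first by rewrite lee_fin.
rewrite -esumD; last 2 first.
- by move=> *; apply: poweR_ge0.
- by move=> *; apply: poweR_ge0.
apply: (le_trans (@le_esum _ _ _ _ (fun k => K%:E * (poweR (loc_int p f1 k) s +
   poweR (loc_int p f2 k) s)) _)).
  move=> k Xk; have [mh [m1 m2]] := mk k Xk.
  apply: powe_le; rewrite ?loc_int_ge0 //.
    by rewrite mulr_gt0 // powR_gt0 //; lra.
  apply: loc_int_le => //; lra.
apply: esumZ_le => // i; apply: adde_ge0; exact: poweR_ge0.
Qed.

Local Notation gn := (grand_norm X p q theta).
Local Notation L := (grand_amalgam X p q theta).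
Local Notation V := (vanishing_grand_amalgam X p q theta).


Lemma fin_lty (x : \bar R) : x \is a fin_num -> x < +oo.
Proof. by rewrite ltey_eq => ->. Qed.

Lemma gs_ge0 g eps : 0 <= gs g eps.
Proof.
rewrite /grand_sum; apply: mule_ge0; first by rewrite lee_fin powR_ge0.
by apply: esum_ge0 => *; exact: poweR_ge0.
Qed.

Lemma gn_ub g eps : (0 < eps)%R ->
  poweR (gs g eps) (q * (1 + eps))^-1 <= gn g.
Proof. by move=> e0; apply: ereal_sup_ubound; exists eps. Qed.

Lemma gn_ge0 g : 0 <= gn g.
Proof. have h := @gn_ub g 1%R ltr01. apply: le_trans h. exact: poweR_ge0. Qed.

Lemma r_gt0 eps : (0 < eps)%R -> (0 < q * (1 + eps))%R.
Proof.
move=> e0; have q0 : (0 < q)%R := lt_le_trans ltr01 hq.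
by rewrite mulr_gt0 // ltr_wpDr // ltW.
Qed.

Lemma gs_fin g eps : gn g < +oo -> (0 < eps)%R -> gs g eps \is a fin_num.
Proof.
move=> gnf e0; rewrite ge0_fin_numE ?gs_ge0 //.
apply: (@lty_poweRy _ _ (q * (1 + eps))^-1).
  by rewrite invr_neq0 // gt_eqF // r_gt0.
exact: le_lt_trans (gn_ub g eps e0) gnf.
Qed.

Lemma gs_bound g eps (N : R) : (0 < eps)%R -> gn g <= N%:E ->
  (fine (gs g eps) <= N `^ (q * (1 + eps)))%R.
Proof.
move=> e0 gnN.
have gf : gs g eps \is a fin_num.
  by apply: gs_fin => //; exact: le_lt_trans gnN (ltry _).
set r := (q * (1 + eps))%R.
have r0 : (0 < r)%R by apply: r_gt0.
have := gn_ub g eps e0; rewrite -/r -(fineK gf) poweR_EFin => /le_trans /(_ gnN).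
rewrite lee_fin => hx.
have x0 : (0 <= fine (gs g eps))%R by rewrite fine_ge0 // gs_ge0.
have -> : fine (gs g eps) = ((fine (gs g eps) `^ r^-1) `^ r)%R.
  by rewrite -powRrM mulVf ?gt_eqF // powRr1.
apply: (ge0_ler_powR (ltW r0)) => //; rewrite ?nnegrE ?powR_ge0 //.
exact: (le_trans (powR_ge0 _ _) hx).
Qed.

Lemma gn_fin_eq g : gn g < +oo -> exists N : R, (0 <= N)%R /\ gn g = N%:E.
Proof.
move=> nf; exists (fine (gn g)); split; first by apply: fine_ge0; exact: gn_ge0.
by apply/esym/fineK; rewrite ge0_fin_numE; [exact: nf|exact: gn_ge0].
Qed.

Lemma ReD (a b : R[i]) : complex.Re (a + b)%R = (complex.Re a + complex.Re b)%R.
Proof. by case: a; case: b. Qed.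
Lemma ImD (a b : R[i]) : complex.Im (a + b)%R = (complex.Im a + complex.Im b)%R.
Proof. by case: a; case: b. Qed.
Lemma ReB (a b : R[i]) : complex.Re (a - b)%R = (complex.Re a - complex.Re b)%R.
Proof. by case: a; case: b. Qed.
Lemma ImB (a b : R[i]) : complex.Im (a - b)%R = (complex.Im a - complex.Im b)%R.
Proof. by case: a; case: b. Qed.
Lemma ReM (a b : R[i]) : complex.Re (a * b)%R =
  (complex.Re a * complex.Re b - complex.Im a * complex.Im b)%R.
Proof. by case: a; case: b. Qed.
Lemma ImM (a b : R[i]) : complex.Im (a * b)%R =
  (complex.Re a * complex.Im b + complex.Im a * complex.Re b)%R.
Proof. by case: a; case: b. Qed.

Lemma cm_add (D : set R) (f g : R -> R[i]) : cmeasurable_on D f -> cmeasurable_on D g ->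
  cmeasurable_on D (fun x => f x + g x)%R.
Proof.
move=> [mf1 mf2] [mg1 mg2]; split.
  by under eq_fun do rewrite ReD; exact: measurable_funD.
by under eq_fun do rewrite ImD; exact: measurable_funD.
Qed.

Lemma cm_sub (D : set R) (f g : R -> R[i]) : cmeasurable_on D f -> cmeasurable_on D g ->
  cmeasurable_on D (fun x => f x - g x)%R.
Proof.
move=> [mf1 mf2] [mg1 mg2]; split.
  by under eq_fun do rewrite ReB; exact: measurable_funB.
by under eq_fun do rewrite ImB; exact: measurable_funB.
Qed.

Lemma cm_scale (D : set R) (c : R[i]) (g : R -> R[i]) : cmeasurable_on D g ->
  cmeasurable_on D (fun x => c * g x)%R.
Proof.
move=> [mg1 mg2]; split.
  under eq_fun do rewrite ReM.
  by apply: measurable_funB; apply: measurable_funM => //; exact: measurable_cst.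
under eq_fun do rewrite ImM.
by apply: measurable_funD; apply: measurable_funM => //; exact: measurable_cst.
Qed.


Lemma VG (h f1 f2 : R -> R[i]) (M : R) : (1 <= M)%R -> V f1 -> V f2 ->
  (forall k, idx_set X k -> cmeasurable_on (@I_k R k) h) ->
  (forall x, (nc (h x) <= M * (nc (f1 x) + nc (f2 x)))%R) -> V h.
Proof.
move=> M1 [[lf1 nf1] cf1] [[lf2 nf2] cf2] mh hb.
have mk : forall k, idx_set X k -> cmeasurable_on (@I_k R k) h /\
    cmeasurable_on (@I_k R k) f1 /\ cmeasurable_on (@I_k R k) f2.
  by move=> k Xk; split; [exact: mh|split; [exact: (lf1 k Xk).1|exact: (lf2 k Xk).1]].
have p0 : (0 < p)%R := lt_le_trans ltr01 hp.
have q0 : (0 < q)%R := lt_le_trans ltr01 hq.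
have M0 : (0 <= M)%R := le_trans ler01 M1.
set c := cst_c M.
have c1 : (1 <= c)%R := cst_c_ge1 M M1.
have c0 : (0 <= c)%R := le_trans ler01 c1.
have locfin : forall f, locLp X p f -> forall k, idx_set X k ->
    loc_int p f k \is a fin_num.
  by move=> f lf k Xk; rewrite ge0_fin_numE ?loc_int_ge0 //; exact: (lf k Xk).2.
have gsf1 : forall eps, (0 < eps)%R -> gs f1 eps \is a fin_num.
  by move=> eps e0; exact: gs_fin.
have gsf2 : forall eps, (0 < eps)%R -> gs f2 eps \is a fin_num.
  by move=> eps e0; exact: gs_fin.
have hcore : forall eps, (0 < eps)%R ->
    gs h eps <= (c `^ (q * (1 + eps) / p))%:E * (gs f1 eps + gs f2 eps).
  by move=> eps e0; exact: (@core h f1 f2 M eps M1 e0 mk hb).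
have gshf : forall eps, (0 < eps)%R -> gs h eps \is a fin_num.
  move=> eps e0; rewrite ge0_fin_numE ?gs_ge0 //.
  apply: (le_lt_trans (hcore eps e0)); apply: fin_lty.
  apply: fin_numM; first by [].
  by rewrite fin_numD; apply/andP; split; [exact: gsf1|exact: gsf2].
split; [split|].
- move=> k Xk; split; first exact: mh.
  have := @loc_int_le R p h f1 f2 M k M0 (ltW p0) (mh k Xk) (lf1 k Xk).1
     (lf2 k Xk).1 hb.
  move=> /le_lt_trans; apply; apply: fin_lty.
  apply: fin_numM; first by [].
  by rewrite fin_numD; apply/andP; split; [exact: locfin|exact: locfin].
- have [N1 [N10 gf1]] := gn_fin_eq f1 nf1.
  have [N2 [N20 gf2]] := gn_fin_eq f2 nf2.
  set N := (N1 + N2)%R.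
  have N0 : (0 <= N)%R by rewrite addr_ge0.
  apply: (@le_lt_trans _ _ ((c `^ p^-1 * 2 * N)%R)%:E); last exact: ltry.
  apply: ge_ereal_sup => _ [eps e0 <-].
  have r0 : (0 < q * (1 + eps))%R by apply: r_gt0.
  have r1 : (1 <= q * (1 + eps))%R.
    by have := ler_pM ler01 ler01 hq (_ : 1 <= 1 + eps)%R; rewrite mulr1;
       apply; rewrite lerDl ltW.
  set r := (q * (1 + eps))%R.
  have x1 : (fine (gs f1 eps) <= N1 `^ r)%R by apply: gs_bound; rewrite ?gf1.
  have x2 : (fine (gs f2 eps) <= N2 `^ r)%R by apply: gs_bound; rewrite ?gf2.
  have hc := hcore eps e0.
  rewrite -(fineK (gshf eps e0)) -(fineK (gsf1 eps e0)) -(fineK (gsf2 eps e0))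
     -EFinD -EFinM lee_fin in hc.
  rewrite -(fineK (gshf eps e0)) poweR_EFin lee_fin.
  have K0 : (0 <= c `^ (r / p))%R by apply: powR_ge0.
  have N1N : (N1 <= N)%R by rewrite /N lerDl.
  have N2N : (N2 <= N)%R by rewrite /N lerDr.
  have N1r : (N1 `^ r <= N `^ r)%R.
    by apply: (ge0_ler_powR (ltW r0)); rewrite ?nnegrE.
  have N2r : (N2 `^ r <= N `^ r)%R.
    by apply: (ge0_ler_powR (ltW r0)); rewrite ?nnegrE.
  have Nr0 : (0 <= N `^ r)%R by apply: powR_ge0.
  have hb2 : (fine (gs h eps) <= c `^ (r / p) * (2 * N `^ r))%R.
    apply: (le_trans hc); apply: ler_wpM2l => //.
    rewrite mulr_natl mulr2n; apply: lerD.
      exact: le_trans x1 N1r.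
    exact: le_trans x2 N2r.
  have xh0 : (0 <= fine (gs h eps))%R by apply: fine_ge0; exact: gs_ge0.
  have ri0 : (0 <= r^-1)%R by rewrite invr_ge0 ltW.
  have rhs0 : (0 <= c `^ (r / p) * (2 * N `^ r))%R.
    by rewrite mulr_ge0 // mulr_ge0.
  apply: (le_trans (ge0_ler_powR ri0 _ _ hb2)); rewrite ?nnegrE //.
  rewrite powRM ?mulr_ge0 ?powR_ge0 // powRM ?powR_ge0 //.
  rewrite -!powRrM mulfV ?gt_eqF // powRr1 //.
  have -> : (r / p * r^-1 = p^-1)%R by rewrite mulrAC mulfV ?gt_eqF // mul1r.
  rewrite -[X in (_ <= X)%R]mulrA; apply: ler_wpM2l; first exact: powR_ge0.
  apply: ler_wpM2r => //; apply: ler1_powR; first by rewrite ler1n.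
  by rewrite invf_le1.
- set K1 := (c `^ (2 * q / p))%R.
  apply: (@squeeze_cvge _ _ _ R (fun=> 0) _
    (fun eps => K1%:E * (gs f1 eps + gs f2 eps))).
  + apply: filterS2 (nbhs_right_gt 0%R) (nbhs_right_lt ltr01) => eps e0 e1.
    apply/andP; split; first exact: gs_ge0.
    apply: (le_trans (hcore eps e0)); apply: lee_wpmul2r.
      by apply: adde_ge0; exact: gs_ge0.
    rewrite lee_fin; apply: ler_powR => //.
    apply: ler_wpM2r; first by rewrite invr_ge0 ltW.
    rewrite mulrDr mulr1 mulr_natl mulr2n lerD2l.
    by apply: ler_piMr; [exact: ltW | exact: ltW].
  + exact: cvg_cst.
  + have K1f : K1%:E \is a fin_num by [].
    have h0 : (fun eps => gs f1 eps + gs f2 eps) @ 0%R^'+ --> (0 + 0 : \bar R).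
      apply: cvgeD; [by []|exact: cf1|exact: cf2].
    by have := cvgeZl K1f h0; rewrite adde0 mule0.
Qed.


Lemma V0 : V (fun _ => 0%R).
Proof.
have p0 : (0 < p)%R := lt_le_trans ltr01 hp.
have q0 : (0 < q)%R := lt_le_trans ltr01 hq.
have loc0 : forall k, loc_int p (fun _ => 0%R) k = 0.
  move=> k; rewrite /loc_int; apply: integral0_eq => x _.
  by rewrite ncE /= expr0n /= addr0 sqrtr0 powR0 // gt_eqF.
have gs0 : forall eps, (0 < eps)%R -> gs (fun _ => 0%R) eps = 0.
  move=> eps e0; rewrite /grand_sum esum1 ?mule0 // => k _.
  rewrite loc0 poweR0r // gt_eqF // divr_gt0 // mulr_gt0 //.
  by rewrite ltr_wpDr // ltW.
split; [split|].
- move=> k _; split; first by split; exact: measurable_cst.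
  by rewrite loc0; exact: ltry.
- apply: (@le_lt_trans _ _ 0); last exact: ltry.
  apply: ge_ereal_sup => _ [eps e0 <-].
  by rewrite gs0 // poweR0r // invr_neq0 // gt_eqF // r_gt0.
- apply: (@squeeze_cvge _ _ _ R (fun=> 0) _ (fun=> 0)).
  + apply: filterS (nbhs_right_gt 0%R) => eps e0.
    by rewrite gs0 // lexx.
  + exact: cvg_cst.
  + exact: cvg_cst.
Qed.

Lemma VC g : L g ->
  (forall delta : R, (0 < delta)%R ->
     exists2 h, V h & gn (fun x => (g x - h x)%R) < delta%:E) -> V g.
Proof.
move=> Lg happ; split => //.
have [lg ng] := Lg.
have p0 : (0 < p)%R := lt_le_trans ltr01 hp.
have q0 : (0 < q)%R := lt_le_trans ltr01 hq.
set c := cst_c 1%R.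
have c1 : (1 <= c)%R := cst_c_ge1 1%R (lexx 1%R).
have c0 : (0 < c)%R := lt_le_trans ltr01 c1.
set K1 := (c `^ (2 * q / p))%R.
have K10 : (0 < K1)%R by apply: powR_gt0.
apply/fine_cvgP; split.
  by apply: filterS (nbhs_right_gt 0%R) => eps e0; exact: gs_fin.
apply/cvgr0Pnorm_lt => e e0.
set a := (e / (2 * K1))%R.
have a0 : (0 < a)%R by rewrite divr_gt0 // mulr_gt0.
have b0 : (0 < a / (1 + a))%R by rewrite divr_gt0 // addr_gt0.
have b1 : (a / (1 + a) <= 1)%R.
  by rewrite ler_pdivrMr ?addr_gt0 // mul1r lerDr ler01.
have ba : (a / (1 + a) <= a)%R.
  by rewrite ler_pdivrMr ?addr_gt0 // ler_pMr // lerDl ltW.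
set d := ((a / (1 + a)) `^ q^-1)%R.
have d0 : (0 < d)%R by apply: powR_gt0.
have d1 : (d <= 1)%R.
  have -> : (1 = 1 `^ q^-1 :> R)%R by rewrite powR1.
  have qi0 : (0 <= q^-1)%R by rewrite invr_ge0 ltW.
  apply: (ge0_ler_powR qi0); [rewrite nnegrE; exact: ltW | by rewrite nnegrE | exact: b1].
have dq : (d `^ q <= a)%R.
  by rewrite /d -powRrM mulVf ?gt_eqF // powRr1 // ltW.
have [h Vh hD] := happ d d0.
have [[lh nh] ch] := Vh.
have nD : gn (fun x => (g x - h x)%R) < +oo by apply: lt_trans hD (ltry _).
have mk : forall k, idx_set X k -> cmeasurable_on (@I_k R k) g /\
    cmeasurable_on (@I_k R k) (fun x => (g x - h x)%R) /\
    cmeasurable_on (@I_k R k) h.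
  move=> k Xk; split; first exact: (lg k Xk).1.
  split; last exact: (lh k Xk).1.
  by apply: cm_sub; [exact: (lg k Xk).1|exact: (lh k Xk).1].
have hb : forall x, (nc (g x) <= 1 * (nc (g x - h x) + nc (h x)))%R.
  move=> x; rewrite mul1r.
  have := le_normcD (g x - h x)%R (h x); by rewrite subrK.
have := ch; move/fine_cvgP => [_ chf].
move/cvgr0Pnorm_lt : chf => /(_ a a0) hn.
apply: filterS3 (nbhs_right_gt 0%R) (nbhs_right_lt ltr01) hn => eps e0' e1 hxh.
rewrite /=.
have gf := gs_fin g eps ng e0'.
have Df := gs_fin (fun x => (g x - h x)%R) eps nD e0'.
have hf := gs_fin h eps nh e0'.
have hc := @core g (fun x => (g x - h x)%R) h 1%R eps (lexx 1%R) e0' mk hb.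
rewrite -(fineK gf) -(fineK Df) -(fineK hf) -EFinD -EFinM lee_fin in hc.
have r0 : (0 < q * (1 + eps))%R by apply: r_gt0.
have xD : (fine (gs (fun x => (g x - h x)%R) eps) <= d `^ (q * (1 + eps)))%R.
  by apply: gs_bound => //; exact: ltW.
have qr : (q <= q * (1 + eps))%R by rewrite ler_pMr // lerDl ltW.
have drq : (d `^ (q * (1 + eps)) <= d `^ q)%R.
  by apply: ger_powR => //; rewrite d0 d1.
have Kle : (c `^ (q * (1 + eps) / p) <= K1)%R.
  rewrite /K1; apply: ler_powR => //.
  apply: ler_wpM2r; first by rewrite invr_ge0 ltW.
  rewrite mulrDr mulr1 mulr_natl mulr2n lerD2l.
  by apply: ler_piMr; [exact: ltW | exact: ltW].
have xg0 : (0 <= fine (gs g eps))%R by apply: fine_ge0; exact: gs_ge0.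
have xD0 : (0 <= fine (gs (fun x => (g x - h x)%R) eps))%R.
  by apply: fine_ge0; exact: gs_ge0.
have xh0 : (0 <= fine (gs h eps))%R by apply: fine_ge0; exact: gs_ge0.
rewrite ger0_norm in hxh; last exact: xh0.
rewrite ger0_norm; last exact: xg0.
apply: (le_lt_trans hc).
apply: (@le_lt_trans _ _ (K1 * (a + fine (gs h eps)))%R).
  apply: ler_pM; [exact: powR_ge0 | exact: addr_ge0 xD0 xh0 | exact: Kle | ].
  rewrite lerD2r; apply: (le_trans xD); exact: (le_trans drq dq).
apply: (@lt_le_trans _ _ (K1 * (a + a))%R).
  rewrite ltr_pM2l; last exact: K10.
  by rewrite ltrD2l.
have K1n : (K1 != 0)%R by rewrite gt_eqF.
have -> : (K1 * (a + a) = e)%R.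
  rewrite /a; field; exact: K1n.
exact: lexx.
Qed.

End Core.


Theorem theorem2p11 (R : realType) (X : index_kind) (p q theta : R)
  (hp : 1 <= p) (hq : 1 <= q) (htheta : 0 < theta) :
  let L := grand_amalgam X p q theta in
  let V := vanishing_grand_amalgam X p q theta in
  (* V is a subset of L *)
  V `<=` L /\
  (* V is a (complex) linear subspace *)
  V (fun _ => 0) /\
  (forall f g, V f -> V g -> V (fun x => f x + g x)) /\
  (forall (c : R[i]) g, V g -> V (fun x => c * g x)) /\
  (* V is closed in L for the topology of the norm ||.||_{p,q),theta} *)
  (forall g, L g ->
     (forall delta : R, 0 < delta ->
        exists2 h, V h & (grand_norm X p q theta (fun x => (g x - h x)%R) < delta%:E)%E) ->
     V g).
Proof.
move=> L V; rewrite {}/L {}/V.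
split; first by move=> g [].
split; first exact: (@V0 R X p q theta hp hq).
split.
  move=> f g Vf Vg.
  apply: (@VG R X p q theta hp hq _ f g 1%R (lexx _) Vf Vg).
    move=> k Xk; apply: cm_add; [exact: (Vf.1.1 k Xk).1 | exact: (Vg.1.1 k Xk).1].
  by move=> x; rewrite mul1r; exact: le_normcD.
split.
  move=> c g Vg.
  apply: (@VG R X p q theta hp hq _ g g (ComplexField.Normc.normc c + 1) _ Vg Vg).
  - by rewrite lerDr nc_ge0.
  - move=> k Xk; apply: cm_scale; exact: (Vg.1.1 k Xk).1.
  - move=> x; rewrite ComplexField.Normc.normcM; apply: ab_le; exact: nc_ge0.
exact: (@VC R X p q theta hp hq).
Qed.
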